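(* Let $A, C, D$ be binary random variables, with $A$ taking values $a,\overline{a}$, $C$ taking values $c,\overline{c}$, $D$ taking values $d,\overline{d}$, and let $Y$ be a real random variable with finite expectation. Suppose the joint distribution factorizes as \[ p(A,C,D,Y)=p(C)\,p(D\mid C)\,p(A\mid C)\,p(Y\mid A,C), \] and that every event $\{A=x, C=y, D=z\}$ has positive probability. Let $p(c)=0.5$, $p(d\mid c)=p(\overline{d}\mid\overline{c})\ge 0.5$ and $p(\overline{a}\mid\overline{c})\ge p(a\mid c)\ge 0.5$. If \[ E[Y|a,c]-E[Y|a,\overline{c}]\ \ge\ E[Y|\overline{a},\overline{c}]-E[Y|\overline{a},c]\ \ge\ 0, \] then $RD_{crude}\ge RD_{true}$ and $RD_{obs}\ge RD_{true}$.
   Context: $RD_{true}=E[Y|a,c]p(c)+E[Y|a,\overline{c}]p(\overline{c})-E[Y|\overline{a},c]p(c)-E[Y|\overline{a},\overline{c}]p(\overline{c})$; $RD_{crude}=E[Y|a]-E[Y|\overline{a}]$; $RD_{obs}=E[Y|a,d]p(d)+E[Y|a,\overline{d}]p(\overline{d})-E[Y|\overline{a},d]p(d)-E[Y|\overline{a},\overline{d}]p(\overline{d})$. *)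

(* Defs.v *)
From HB Require Import structures.
From mathcomp Require Import all_boot all_order all_algebra.
From mathcomp Require Import all_classical all_reals all_analysis.
Set Implicit Arguments. Unset Strict Implicit. Unset Printing Implicit Defensive.
Import Order.TTheory GRing.Theory Num.Theory.
Local Open Scope classical_set_scope.
Local Open Scope ring_scope.

Section Defs.
Context (d : measure_display) (T : measurableType d) (R : realType)
  (P : probability T R).

Definition prob (B : set T) : R := fine (P B).

Definition ev (X : T -> bool) (x : bool) : set T := [set t | X t = x].

Definition cprob (B G : set T) : R := prob (B `&` G) / prob G.

Definition cexp (Y : T -> R) (B : set T) : R :=
  fine (\int[P]_(t in B) (Y t)%:E) / prob B.

(* Convention: value a = true, abar = false (likewise for C and D). *)
Definition RD_true (A C : T -> bool) (Y : T -> R) : R :=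
  cexp Y (ev A true `&` ev C true) * prob (ev C true)
  + cexp Y (ev A true `&` ev C false) * prob (ev C false)
  - cexp Y (ev A false `&` ev C true) * prob (ev C true)
  - cexp Y (ev A false `&` ev C false) * prob (ev C false).

Definition RD_crude (A : T -> bool) (Y : T -> R) : R :=
  cexp Y (ev A true) - cexp Y (ev A false).

Definition RD_obs (A D : T -> bool) (Y : T -> R) : R :=
  cexp Y (ev A true `&` ev D true) * prob (ev D true)
  + cexp Y (ev A true `&` ev D false) * prob (ev D false)
  - cexp Y (ev A false `&` ev D true) * prob (ev D true)
  - cexp Y (ev A false `&` ev D false) * prob (ev D false).

End Defs.

(* Main.v *)
Require Import Defs.
From HB Require Import structures.
From mathcomp Require Import all_boot all_order all_algebra.
From mathcomp Require Import all_classical all_reals all_analysis measurable_realfun.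
From mathcomp Require Import ring lra.
Import Order.TTheory GRing.Theory Num.Theory.
Local Open Scope classical_set_scope.
Local Open Scope ring_scope.

Lemma int_restr d (T : measurableType d) (R : realType) (P : probability T R)
  (B : set T) (mB : measurable B) (f : T -> \bar R) (mf : measurable_fun [set: T] f) :
  (\int[mrestr P mB]_(x in setT) f x = \int[P]_(x in B) f x)%E.
Proof.
have -> : [set: T] = B `|` ~` B by rewrite setUv.
rewrite integral_setU //; last 3 first.
- exact: measurableC.
- by rewrite setUv.
- by rewrite /disj_set setICr.
rewrite (@eq_measure_integral _ _ _ (~` B) mzero); last first.
  move=> X mX XB; transitivity (P (X `&` B)); first by [].
  have -> : X `&` B = set0.
    by apply/seteqP; split => // x [/XB].
  by rewrite measure0.
rewrite integral_measure_zero adde0.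
apply: eq_measure_integral => X mX XB /=.
transitivity (P (X `&` B)); first by []. congr (P _); apply/seteqP; split => [x []//|x Xx]; split; [exact: Xx|exact: XB].
Qed.

Arguments int_restr {d T R} P {B} mB {f} mf.

Lemma int_mscale (R : realType) (m : measure R R) (c : R) (c0 : 0 <= c)
  (i : m.-integrable [set: R] EFin) :
  (\int[mscale (NngNum c0) m]_(x in [set: R]) x%:E = c%:E * \int[m]_(x in [set: R]) x%:E)%E.
Proof.
have mE : measurable_fun [set: R] (@EFin R) by exact/measurable_EFinP.
have hp : (\int[mscale (NngNum c0) m]_(x in [set: R]) (@EFin R)^\+ x =
     c%:E * \int[m]_(x in [set: R]) (@EFin R)^\+ x)%E.
  rewrite ge0_integral_mscale //; first exact: measurable_funepos.
have hn : (\int[mscale (NngNum c0) m]_(x in [set: R]) (@EFin R)^\- x =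
     c%:E * \int[m]_(x in [set: R]) (@EFin R)^\- x)%E.
  rewrite ge0_integral_mscale //; first exact: measurable_funeneg.
rewrite integralE [in RHS]integralE hp hn.
rewrite -muleBr //.
apply: fin_num_adde_defl.
rewrite fin_numN.
exact: integrable_neg_fin_num.
Qed.

Lemma int_scale d (T : measurableType d) (R : realType) (P : probability T R)
  (Y : T -> R) (mY : measurable_fun [set: T] Y)
  (iY : P.-integrable [set: T] (fun t => (Y t)%:E))
  (B1 B2 : set T) (m1 : measurable B1) (m2 : measurable B2) (c : R) (c0 : 0 <= c)
  (H : forall S, measurable S ->
        P (B1 `&` Y @^-1` S) = (c%:E * P (B2 `&` Y @^-1` S))%E) :
  (\int[P]_(x in B1) (Y x)%:E = c%:E * \int[P]_(x in B2) (Y x)%:E)%E.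
Proof.
have mEY : measurable_fun [set: T] (fun x => (Y x)%:E).
  exact/measurable_EFinP.
have iB (B : set T) (mB : measurable B) :
    (mrestr P mB).-integrable (Y @^-1` [set: R]) (EFin \o Y).
  apply/integrableP; split; first exact: mEY.
  rewrite preimage_setT (int_restr P mB); last first.
    exact: measurableT_comp.
  have /integrableP[_ ] := integrableS measurableT mB (subsetT B) iY.
  by [].
have pf (B : set T) (mB : measurable B) :
  (\int[P]_(x in B) (Y x)%:E = \int[pushforward (mrestr P mB) Y]_(y in [set: R]) y%:E)%E.
  by rewrite -(int_restr P mB mEY) (integral_pushforward mY _ (iB B mB)).
rewrite (pf _ m1) (pf _ m2).
rewrite (@eq_measure_integral _ _ _ _ (mscale (NngNum c0) (pushforward (mrestr P m2) Y))); last first.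
  move=> S mS _; rewrite /= /mscale /pushforward /mrestr /=.
  by rewrite setIC H // setIC.
rewrite int_mscale //.
apply: integrable_pushforward => //.
exact: iB.
Qed.

Lemma probE d (T : measurableType d) (R : realType) (P : probability T R)
  (B : set T) (mB : measurable B) : P B = (prob P B)%:E.
Proof. by rewrite /prob fineK // fin_num_measure. Qed.
Arguments probE {d T R} P {B} mB.

Lemma prob_ge0 d (T : measurableType d) (R : realType) (P : probability T R)
  (B : set T) : 0 <= prob P B.
Proof. by rewrite /prob fine_ge0 // measure_ge0. Qed.

Lemma prob_le d (T : measurableType d) (R : realType) (P : probability T R)
  (B1 B2 : set T) (m1 : measurable B1) (m2 : measurable B2) :
  B1 `<=` B2 -> prob P B1 <= prob P B2.
Proof.
move=> sub; have h : (P B1 <= P B2)%E by apply: le_measure => //; rewrite inE.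
by rewrite (probE P m1) (probE P m2) lee_fin in h.
Qed.

Lemma split_set d (T : measurableType d) (B : set T) (X : T -> bool) :
  B = (B `&` ev X true) `|` (B `&` ev X false).
Proof.
apply/seteqP; split => [t Bt|t [[Bt _]|[Bt _]]] //.
by rewrite /ev /=; case: (X t); [left|right].
Qed.

Lemma split_disj d (T : measurableType d) (B : set T) (X : T -> bool) :
  (B `&` ev X true) `&` (B `&` ev X false) = set0.
Proof.
apply/seteqP; split => // t [[_ h1] [_ h2]].
by move: h1 h2; rewrite /ev /= => ->.
Qed.

Lemma prob_split d (T : measurableType d) (R : realType) (P : probability T R)
  (B : set T) (X : T -> bool) (mB : measurable B)
  (mX : forall x, measurable (ev X x)) :
  prob P B = prob P (B `&` ev X true) + prob P (B `&` ev X false).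
Proof.
have m1 : measurable (B `&` ev X true) by exact: measurableI.
have m2 : measurable (B `&` ev X false) by exact: measurableI.
rewrite {1}(@split_set _ _ B X) /prob measureU // ?split_disj //.
by rewrite fineD // fin_num_measure.
Qed.

Lemma int_split d (T : measurableType d) (R : realType) (P : probability T R)
  (Y : T -> R) (mY : measurable_fun [set: T] Y)
  (iY : P.-integrable [set: T] (fun t => (Y t)%:E))
  (B : set T) (X : T -> bool) (mB : measurable B)
  (mX : forall x, measurable (ev X x)) :
  fine (\int[P]_(t in B) (Y t)%:E)%E =
  fine (\int[P]_(t in B `&` ev X true) (Y t)%:E)%E +
  fine (\int[P]_(t in B `&` ev X false) (Y t)%:E)%E.
Proof.
have m1 : measurable (B `&` ev X true) by exact: measurableI.
have m2 : measurable (B `&` ev X false) by exact: measurableI.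
have mEY : measurable_fun [set: T] (fun x => (Y x)%:E).
  exact/measurable_EFinP.
rewrite {1}(@split_set _ _ B X) integral_setU //; last 2 first.
- exact: measurable_funTS.
- by rewrite /disj_set split_disj.
rewrite fineD //.
- apply: integrable_fin_num => //.
  exact: integrableS measurableT m1 (subsetT _) iY.
- apply: integrable_fin_num => //.
  exact: integrableS measurableT m2 (subsetT _) iY.
Qed.

Arguments prob_split {d T R} P {B X} mB mX.
Arguments int_split {d T R P Y} mY iY {B X} mB mX.
Arguments int_scale {d T R P Y} mY iY {B1 B2} m1 m2 {c} c0 H.
Arguments prob_le {d T R} P {B1 B2} m1 m2.

Lemma aux (R : fieldType) (p q e : R) : q != 0 -> p / q * (e * q) = e * p.
Proof. by move=> h; field. Qed.

Lemma wavg (R : realFieldType) (s t x y : R) : s + t != 0 ->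
  (s * x + t * y) / (s + t) = (x + y) / 2 + (s - t) / (2 * (s + t)) * (x - y).
Proof. by move=> h; field. Qed.

Lemma alg1 (R : realFieldType) (a b e11 e10 e01 e00 : R) :
  1/2 <= a -> a <= b -> b < 1 -> e00 - e01 <= e11 - e10 -> 0 <= e00 - e01 ->
  (e11 + e10 - e01 - e00) / 2 <=
  (a * e11 + (1 - b) * e10) / (a + (1 - b)) - ((1 - a) * e01 + b * e00) / ((1 - a) + b).
Proof.
move=> ha hab hb hX hZ.
have m0 : 0 < a + (1 - b) by lra.
have n0 : 0 < (1 - a) + b by lra.
rewrite !wavg; [|by rewrite gt_eqF|by rewrite gt_eqF].
set k1 := (a - (1 - b)) / (2 * (a + (1 - b))).
set k0 := ((1 - a) - b) / (2 * ((1 - a) + b)).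
have k1p : 0 <= k1 by rewrite /k1 divr_ge0 //; lra.
have kk : k1 + k0 = (a + b - 1) * (b - a) / ((a + (1 - b)) * ((1 - a) + b)).
  rewrite /k1 /k0; field; rewrite !gt_eqF //.
have kkp : 0 <= k1 + k0.
  rewrite kk divr_ge0 // ?mulr_ge0 //; lra.
have e : (e11 + e10) / 2 + k1 * (e11 - e10) - ((e01 + e00) / 2 + k0 * (e01 - e00))
   = (e11 + e10 - e01 - e00) / 2 + (k1 * ((e11 - e10) - (e00 - e01)) + (k1 + k0) * (e00 - e01)).
  ring.
rewrite e lerDl addr_ge0 // mulr_ge0 //; lra.
Qed.

Lemma alg2 (R : realFieldType) (a b dl e11 e10 e01 e00 : R) :
  1/2 <= a -> a <= b -> b < 1 -> 0 < dl -> dl < 1 ->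
  e00 - e01 <= e11 - e10 -> 0 <= e00 - e01 ->
  (e11 + e10 - e01 - e00) / 2 <=
  ((dl * a * e11 + (1 - dl) * (1 - b) * e10) / (dl * a + (1 - dl) * (1 - b))
   + ((1 - dl) * a * e11 + dl * (1 - b) * e10) / ((1 - dl) * a + dl * (1 - b))
   - (dl * (1 - a) * e01 + (1 - dl) * b * e00) / (dl * (1 - a) + (1 - dl) * b)
   - ((1 - dl) * (1 - a) * e01 + dl * b * e00) / ((1 - dl) * (1 - a) + dl * b)) / 2.
Proof.
move=> ha hab hb hd0 hd1 hX hZ.
have p1 : 0 < dl * a + (1 - dl) * (1 - b) by nra.
have p2 : 0 < (1 - dl) * a + dl * (1 - b) by nra.
have p3 : 0 < dl * (1 - a) + (1 - dl) * b by nra.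
have p4 : 0 < (1 - dl) * (1 - a) + dl * b by nra.
rewrite !wavg ?gt_eqF //.
set c1 := (dl * a - (1 - dl) * (1 - b)) / (2 * (dl * a + (1 - dl) * (1 - b))).
set c2 := ((1 - dl) * a - dl * (1 - b)) / (2 * ((1 - dl) * a + dl * (1 - b))).
set c3 := (dl * (1 - a) - (1 - dl) * b) / (2 * (dl * (1 - a) + (1 - dl) * b)).
set c4 := ((1 - dl) * (1 - a) - dl * b) / (2 * ((1 - dl) * (1 - a) + dl * b)).
set D1 := (dl * a + (1 - dl) * (1 - b)) * ((1 - dl) * a + dl * (1 - b)).
set D2 := (dl * (1 - a) + (1 - dl) * b) * ((1 - dl) * (1 - a) + dl * b).
have D1p : 0 < D1 by rewrite /D1 mulr_gt0.
have D2p : 0 < D2 by rewrite /D2 mulr_gt0.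
have e12 : c1 + c2 = dl * (1 - dl) * (a ^+ 2 - (1 - b) ^+ 2) / D1.
  by rewrite /c1 /c2 /D1; field; rewrite !gt_eqF.
have e34 : c3 + c4 = dl * (1 - dl) * ((1 - a) ^+ 2 - b ^+ 2) / D2.
  by rewrite /c3 /c4 /D2; field; rewrite !gt_eqF.
have c12p : 0 <= c1 + c2.
  have h1 : 0 <= dl * (1 - dl) by nra.
  have h2 : 0 <= a ^+ 2 - (1 - b) ^+ 2 by nra.
  by rewrite e12; apply: divr_ge0; [exact: mulr_ge0 | exact: ltW].
have ctot : c1 + c2 + (c3 + c4) = dl * (1 - dl) *
   ((a + b - 1) * ((1 + b - a) - (a + 1 - b)) / 4 *
    ((a + 1 - b) * (1 + b - a) + (1 - 2 * dl) ^+ 2 * (a + b - 1) ^+ 2)) / (D1 * D2).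
  rewrite e12 e34 /D1 /D2; field; rewrite !gt_eqF //.
have ctp : 0 <= c1 + c2 + (c3 + c4).
  rewrite ctot; apply: divr_ge0; last by apply: ltW; apply: mulr_gt0.
  have h1 : 0 <= dl * (1 - dl) by nra.
  have h2 : 0 <= (a + b - 1) * ((1 + b - a) - (a + 1 - b)) / 4 by rewrite divr_ge0 //; nra.
  have h3 : 0 <= (a + 1 - b) * (1 + b - a) + (1 - 2 * dl) ^+ 2 * (a + b - 1) ^+ 2.
    apply: addr_ge0; last by rewrite mulr_ge0 ?sqr_ge0.
    apply: mulr_ge0; lra.
  by apply: mulr_ge0 => //; apply: mulr_ge0.
have e : ((e11 + e10) / 2 + c1 * (e11 - e10) + ((e11 + e10) / 2 + c2 * (e11 - e10))
    - ((e01 + e00) / 2 + c3 * (e01 - e00)) - ((e01 + e00) / 2 + c4 * (e01 - e00))) / 2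
   = (e11 + e10 - e01 - e00) / 2 +
     ((c1 + c2) * ((e11 - e10) - (e00 - e01)) + (c1 + c2 + (c3 + c4)) * (e00 - e01)) / 2.
  by field.
rewrite e lerDl divr_ge0 // addr_ge0 // mulr_ge0 //; lra.
Qed.

Arguments alg1 {R a b e11 e10 e01 e00}.
Arguments alg2 {R a b dl e11 e10 e01 e00}.

Theorem theorem4 (d : measure_display) (T : measurableType d) (R : realType)
  (P : probability T R) (A C D : T -> bool) (Y : T -> R)
  (mA : forall x, measurable (ev A x))
  (mC : forall x, measurable (ev C x))
  (mD : forall x, measurable (ev D x))
  (mY : measurable_fun setT Y)
  (iY : P.-integrable setT (fun t => (Y t)%:E))
  (* factorization p(A,C,D,Y) = p(C) p(D|C) p(A|C) p(Y|A,C) *)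
  (fact : forall (x y z : bool) (S : set R), measurable S ->
     prob P (ev A x `&` ev C y `&` ev D z `&` (Y @^-1` S)) =
     prob P (ev C y) * cprob P (ev D z) (ev C y) * cprob P (ev A x) (ev C y)
       * cprob P (Y @^-1` S) (ev A x `&` ev C y))
  (pos : forall x y z : bool, 0 < prob P (ev A x `&` ev C y `&` ev D z))
  (pc : prob P (ev C true) = 1 / 2)
  (pd1 : cprob P (ev D true) (ev C true) = cprob P (ev D false) (ev C false))
  (pd2 : 1 / 2 <= cprob P (ev D true) (ev C true))
  (pa1 : cprob P (ev A true) (ev C true) <= cprob P (ev A false) (ev C false))
  (pa2 : 1 / 2 <= cprob P (ev A true) (ev C true))
  (hE1 : cexp P Y (ev A false `&` ev C false) - cexp P Y (ev A false `&` ev C true)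
         <= cexp P Y (ev A true `&` ev C true) - cexp P Y (ev A true `&` ev C false))
  (hE2 : 0 <= cexp P Y (ev A false `&` ev C false) - cexp P Y (ev A false `&` ev C true)) :
  RD_true P A C Y <= RD_crude P A Y /\ RD_true P A C Y <= RD_obs P A D Y.
Proof.
have mAC x y : measurable (ev A x `&` ev C y) by exact: measurableI.
have mACD x y z : measurable (ev A x `&` ev C y `&` ev D z).
  by apply: measurableI => //; exact: measurableI.
have mAD x z : measurable (ev A x `&` ev D z) by exact: measurableI.
have mDC z y : measurable (ev D z `&` ev C y) by exact: measurableI.
have pCpos y : 0 < prob P (ev C y).
  apply: (lt_le_trans (pos true y true)); by apply: prob_le => //; try (by move=> t [[]]); move=> t [].
have pACpos x y : 0 < prob P (ev A x `&` ev C y).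
  apply: (lt_le_trans (pos x y true)); by apply: prob_le => //; try (by move=> t [[]]); move=> t [].
have pDCpos z y : 0 < prob P (ev D z `&` ev C y).
  apply: (lt_le_trans (pos true y z)); by apply: prob_le => //; try (by move=> t [[]]); move=> t [].
have pAxpos x : 0 < prob P (ev A x).
  apply: (lt_le_trans (pos x true true)); by apply: prob_le => //; try (by move=> t [[]]); move=> t [].
have pADpos x z : 0 < prob P (ev A x `&` ev D z).
  apply: (lt_le_trans (pos x true z)); by apply: prob_le => //; try (by move=> t [[]]); move=> t [].
have pCF : prob P (ev C false) = 1 - prob P (ev C true).
  have := prob_split P measurableT mC.
  rewrite !setTI /prob probability_setT /= => ->.
  by rewrite addrAC subrr add0r.
have cDF y : cprob P (ev D false) (ev C y) = 1 - cprob P (ev D true) (ev C y).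
  rewrite /cprob; have := prob_split P (mC y) mD.
  rewrite (setIC (ev C y) (ev D true)) (setIC (ev C y) (ev D false)) => h.
  have hz : prob P (ev C y) != 0 by rewrite gt_eqF.
  by move: hz; rewrite h => hz; field.
have cAF y : cprob P (ev A false) (ev C y) = 1 - cprob P (ev A true) (ev C y).
  rewrite /cprob; have := prob_split P (mC y) mA.
  rewrite (setIC (ev C y) (ev A true)) (setIC (ev C y) (ev A false)) => h.
  have hz : prob P (ev C y) != 0 by rewrite gt_eqF.
  by move: hz; rewrite h => hz; field.
have pAC x y : prob P (ev A x `&` ev C y) = prob P (ev C y) * cprob P (ev A x) (ev C y).
  by rewrite /cprob mulrC divfK // gt_eqF.
have pACD x y z : prob P (ev A x `&` ev C y `&` ev D z) =
    prob P (ev C y) * cprob P (ev D z) (ev C y) * cprob P (ev A x) (ev C y).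
  have := fact x y z _ measurableT.
  rewrite preimage_setT setIT => ->.
  by rewrite /cprob setTI divff ?mulr1 // gt_eqF.
have pDz z : prob P (ev D z) = prob P (ev C true) * cprob P (ev D z) (ev C true)
    + prob P (ev C false) * cprob P (ev D z) (ev C false).
  rewrite (prob_split P (mD z) mC) /cprob [prob P (ev C true) * _]mulrC.
  by rewrite [prob P (ev C false) * _]mulrC !divfK // gt_eqF.
have pA x : prob P (ev A x) = prob P (ev A x `&` ev C true) + prob P (ev A x `&` ev C false).
  exact: prob_split.
have pAD x z : prob P (ev A x `&` ev D z) =
    prob P (ev A x `&` ev C true `&` ev D z) + prob P (ev A x `&` ev C false `&` ev D z).
  by rewrite (prob_split P (mAD x z) mC) (setIAC (ev A x) (ev D z) (ev C true)) (setIAC (ev A x) (ev D z) (ev C false)).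
set I := fun B => fine (\int[P]_(t in B) (Y t)%:E)%E.
have IA x : I (ev A x) = I (ev A x `&` ev C true) + I (ev A x `&` ev C false).
  exact: int_split.
have IAD x z : I (ev A x `&` ev D z) =
    I (ev A x `&` ev C true `&` ev D z) + I (ev A x `&` ev C false `&` ev D z).
  by rewrite /I (int_split mY iY (mAD x z) mC) (setIAC (ev A x) (ev D z) (ev C true)) (setIAC (ev A x) (ev D z) (ev C false)).
have IAC x y : I (ev A x `&` ev C y) = cexp P Y (ev A x `&` ev C y) * prob P (ev A x `&` ev C y).
  by rewrite /cexp divfK // gt_eqF.
have IACD x y z : I (ev A x `&` ev C y `&` ev D z) =
    prob P (ev A x `&` ev C y `&` ev D z) / prob P (ev A x `&` ev C y) * I (ev A x `&` ev C y).
  have c0 : 0 <= prob P (ev A x `&` ev C y `&` ev D z) / prob P (ev A x `&` ev C y).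
    by rewrite divr_ge0 // prob_ge0.
  rewrite /I (int_scale mY iY (mACD x y z) (mAC x y) c0).
    rewrite fineM //.
    apply: integrable_fin_num => //.
    exact: integrableS measurableT (mAC x y) (subsetT _) iY.
  move=> S mS.
  have mYS : measurable (Y @^-1` S) by rewrite -[Y @^-1` S]setTI; exact: mY.
  rewrite (probE P (measurableI _ _ (mACD x y z) mYS)).
  rewrite (probE P (measurableI _ _ (mAC x y) mYS)) -EFinM; congr (_%:E).
  rewrite fact // -pACD /cprob (setIC (Y @^-1` S)).
  by rewrite mulrA mulrAC.
have cA x : cexp P Y (ev A x) =
    (cexp P Y (ev A x `&` ev C true) * prob P (ev A x `&` ev C true)
     + cexp P Y (ev A x `&` ev C false) * prob P (ev A x `&` ev C false))
    / (prob P (ev A x `&` ev C true) + prob P (ev A x `&` ev C false)).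
  by rewrite -!IAC -IA -pA.
have cAD x z : cexp P Y (ev A x `&` ev D z) =
    (cexp P Y (ev A x `&` ev C true) * prob P (ev A x `&` ev C true `&` ev D z)
     + cexp P Y (ev A x `&` ev C false) * prob P (ev A x `&` ev C false `&` ev D z))
    / (prob P (ev A x `&` ev C true `&` ev D z) + prob P (ev A x `&` ev C false `&` ev D z)).
  rewrite -pAD.
  transitivity (I (ev A x `&` ev D z) / prob P (ev A x `&` ev D z)); first by [].
  rewrite IAD !IACD !IAC.
  by rewrite aux ?gt_eqF // aux ?gt_eqF.
have cpos x y : 0 < cprob P (ev A x) (ev C y) by rewrite /cprob divr_gt0.
have cDpos z y : 0 < cprob P (ev D z) (ev C y) by rewrite /cprob divr_gt0.
have cATF : cprob P (ev A true) (ev C false) = 1 - cprob P (ev A false) (ev C false).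
  by rewrite cAF; ring.
have cDTF : cprob P (ev D true) (ev C false) = 1 - cprob P (ev D false) (ev C false).
  by rewrite cDF; ring.
have hb1 : cprob P (ev A false) (ev C false) < 1.
  by have := cpos true false; rewrite cATF; lra.
have hd0 : 0 < cprob P (ev D true) (ev C true) by [].
have hd1 : cprob P (ev D true) (ev C true) < 1.
  by have := cDpos false true; rewrite cDF; lra.
split.
  rewrite /RD_true /RD_crude !cA !pAC pCF pc cATF (cAF true).
  have H := alg1 pa2 pa1 hb1 hE1 hE2.
  rewrite -subr_ge0; rewrite -subr_ge0 in H.
  match goal with |- is_true (_ <= ?G) => match type of H with is_true (_ <= ?G') =>
    have eq : G = G' end end.
    field; repeat (apply/andP; split); rewrite gt_eqF //; lra.
  by rewrite eq.
rewrite /RD_true /RD_obs !cAD !pDz !pACD pCF pc cATF cDTF -pd1 (cAF true) (cDF true).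
have H := alg2 pa2 pa1 hb1 hd0 hd1 hE1 hE2.
rewrite -subr_ge0; rewrite -subr_ge0 in H.
match goal with |- is_true (_ <= ?G) => match type of H with is_true (_ <= ?G') =>
  have eq : G = G' end end.
  field; repeat (apply/andP; split); rewrite gt_eqF //; nra.
by rewrite eq.
Qed.
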